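(* Let $1<p\le2$, $T>0$, and let $\gamma_0,\gamma_1,\gamma_2,\gamma_3,\Lambda>0$ and $\theta\in(0,1]$ be given. Then there exist $\bar k\in(0,1]$, $\bar\gamma_0>0$ and $\gamma_4,\gamma_5>0$ (independent of $\lambda$) such that the following holds. Let $M\in\mathbb N$, $k=T/M\in(0,\bar k)$, $h\in(0,1/\sqrt{\gamma_0})$ with $h^2<\bar\gamma_0 k$, $\lambda\in[0,\Lambda]$, and let $(a_m)_{m=0}^M,(b_m)_{m=0}^M$ be non-negative sequences and $(r_m)_{m=0}^M,(s_m)_{m=0}^M$ sequences with $$a_0^2\le\gamma_0h^2,\quad b_0^2\le\gamma_0h^2,\quad k\sum_{m=0}^Mr_m^2\le\gamma_0h^2,\quad k\sum_{m=0}^Ms_m^2\le\gamma_0h^2,$$ and such that for all $1\le m\le M$ $$\frac{a_m^2-a_{m-1}^2}{k}+\gamma_1(\lambda+b_m)^{p-2}b_m^2\le b_mr_m+\gamma_2b_{m-1}b_m+s_m^2,$$ $$\frac{a_m^2-a_{m-1}^2}{k}+\gamma_1(\lambda+b_m)^{p-2}b_m^2\le b_mr_m+\gamma_3b_mb_{m-1}^{1-\theta}a_m^\theta+s_m^2.$$ Then $\max_{1\le m\le M}b_m\le1$ and $$\max_{1\le m\le M}a_m^2+\gamma_1(\lambda+\Lambda)^{p-2}\,k\sum_{m=1}^Mb_m^2\le\gamma_4h^2\exp(2\gamma_5kM).$$ *)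

(* Defs.v *)
From Stdlib Require Import Reals Lra Lia.
Open Scope R_scope.

(* Real power x^y for x >= 0, with the conventions 0^0 = 1 and 0^y = 0 for
   y <> 0.  (Stdlib's Rpower gives Rpower 0 y = 1, which is wrong for y > 0.)
   For y < 0 the value at x = 0 only ever occurs multiplied by b_m^2 = 0. *)
Definition rpow (x y : R) : R :=
  if Req_EM_T x 0 then (if Req_EM_T y 0 then 1 else 0) else Rpower x y.

Fixpoint max_from1 (f : nat -> R) (M : nat) : R :=
  match M with
  | O => f 1%nat
  | S O => f 1%nat
  | S n => Rmax (max_from1 f n) (f M)
  end.

(* Main.v *)
Require Import Defs.
From Stdlib Require Import Reals Lra Lia.
Open Scope R_scope.

Lemma exp_le_mono x y : x <= y -> exp x <= exp y.
Proof. intros [H|H]; [left; now apply exp_increasing | subst; lra]. Qed.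

Lemma Rpower_le_neg e x y : e <= 0 -> 0 < x -> x <= y -> Rpower y e <= Rpower x e.
Proof.
  intros He Hx [Hxy|Hxy]; [|subst; lra].
  unfold Rpower. apply exp_le_mono.
  pose proof (ln_increasing x y Hx Hxy). nra.
Qed.

Lemma Rpower_pos x e : 0 < Rpower x e.
Proof. unfold Rpower; apply exp_pos. Qed.

Lemma rpow_pos x e : 0 < x -> rpow x e = Rpower x e.
Proof. intros Hx; unfold rpow; destruct (Req_EM_T x 0); [lra|auto]. Qed.

Lemma rpow_nonneg x e : 0 <= rpow x e.
Proof. unfold rpow; destruct (Req_EM_T x 0); [destruct (Req_EM_T e 0); lra|left; apply Rpower_pos]. Qed.

Lemma rpow0 e : e <> 0 -> rpow 0 e = 0.
Proof. intros; unfold rpow; destruct (Req_EM_T 0 0); [destruct (Req_EM_T e 0); lra|lra]. Qed.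

Lemma Rpower_2 x : 0 < x -> Rpower x 2 = x ^ 2.
Proof. intros; replace 2 with (INR 2) by (simpl; lra); now apply Rpower_pow. Qed.

Lemma Rpower_inv_pow x t : 0 < t -> Rpower (Rpower x (1/t)) t = x \/ x <= 0.
Proof.
  intros Ht. destruct (Rle_lt_dec x 0); [now right|left].
  rewrite Rpower_mult. replace (1/t*t) with 1 by (field; lra). now apply Rpower_1.
Qed.

Lemma D_small p Lam lam b : p <= 2 -> 0 <= lam <= Lam -> 0 <= b <= 1 ->
  Rpower (Lam+1) (p-2) * b^2 <= rpow (lam+b) (p-2) * b^2.
Proof.
  intros Hp Hl Hb. destruct (Req_dec b 0) as [->|Hb0]; [lra|].
  rewrite rpow_pos by lra. apply Rmult_le_compat_r; [nra|].
  apply Rpower_le_neg; lra.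
Qed.

Lemma D_big p Lam lam b : 1 < p -> p <= 2 -> 0 <= lam <= Lam -> 0 < Lam -> 1 <= b ->
  Rpower (Lam+1) (p-2) * (b * Rpower b (p-1)) <= rpow (lam+b) (p-2) * b^2.
Proof.
  intros Hp1 Hp Hl HL Hb. rewrite rpow_pos by lra.
  assert (E: Rpower (Lam+1) (p-2) * Rpower b (p-2) <= Rpower (lam+b) (p-2)).
  { rewrite Rpower_mult_distr by lra. apply Rpower_le_neg; nra. }
  assert (E2: b * Rpower b (p-1) = Rpower b (p-2) * b^2).
  { rewrite <- (Rpower_1 b) at 1 by lra. rewrite <- Rpower_2 by lra.
    rewrite <- !Rpower_plus. f_equal; ring. }
  rewrite E2. pose proof (Rpower_pos b (p-2)). nra.
Qed.

Lemma min_case g3 theta L beta a b b' : 0 < g3 -> 0 < theta <= 1 -> 0 < L -> 0 < beta ->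
  Rpower L theta = 8*g3/beta -> 0 <= a -> 0 <= b -> 0 < b' -> L * a < b' ->
  g3 * b * rpow b' (1-theta) * rpow a theta <= beta/8 * b' * b.
Proof.
  intros Hg3 Ht HL Hb HLt Ha Hb0 Hb' Hlt.
  destruct (Req_dec a 0) as [->|Ha0].
  { rewrite rpow0 by lra. rewrite Rmult_0_r. assert (0 <= beta/8*b'*b) by (apply Rmult_le_pos; nra). lra. }
  rewrite !rpow_pos by lra.
  assert (E: Rpower a theta * Rpower L theta <= Rpower b' theta).
  { rewrite Rpower_mult_distr by lra. apply Rle_Rpower_l; nra. }
  rewrite HLt in E.
  assert (E2: Rpower b' (1-theta) * Rpower b' theta = b').
  { rewrite <- Rpower_plus. replace (1-theta+theta) with 1 by ring. now apply Rpower_1. }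
  assert (E3: Rpower a theta <= Rpower b' theta * (beta/(8*g3))).
  { apply (Rmult_le_reg_r (8*g3/beta)). apply Rdiv_lt_0_compat; lra.
    replace (Rpower b' theta * (beta / (8 * g3)) * (8 * g3 / beta)) with (Rpower b' theta) by (field; lra). lra. }
  pose proof (Rpower_pos b' (1-theta)).
  assert (Rpower b' (1 - theta) * Rpower a theta <= b' * (beta/(8*g3))).
  { rewrite <- E2 at 2. rewrite Rmult_assoc. apply Rmult_le_compat_l; lra. }
  assert (g3 * (Rpower b' (1 - theta) * Rpower a theta) <= beta/8*b').
  { replace (beta/8*b') with (g3 * (b' * (beta/(8*g3)))) by (field; lra). apply Rmult_le_compat_l; lra. }
  nra.
Qed.

Lemma step p Lam g1 g2 g3 theta lam k a a' b b' r s beta L :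
  p <= 2 -> 0 <= lam <= Lam -> 0 < g1 -> 0 < g2 -> 0 < g3 -> 0 < theta <= 1 -> 0 < k ->
  0 <= a -> 0 <= a' -> 0 <= b -> 0 <= b' -> b <= 1 ->
  beta = g1 * Rpower (Lam+1) (p-2) -> 0 < L -> Rpower L theta = 8*g3/beta ->
  (a^2 - a'^2)/k + g1 * rpow (lam+b) (p-2) * b^2 <= b*r + g2*b'*b + s^2 ->
  (a^2 - a'^2)/k + g1 * rpow (lam+b) (p-2) * b^2 <= b*r + g3*b*rpow b' (1-theta) * rpow a theta + s^2 ->
  a^2 + k*beta/4*b^2 + k*beta/2*b^2 <= a'^2 + k*beta/4*b'^2 + k*(4/beta*r^2+s^2) + k*(4/beta*(g2*L)^2)*a^2.
Proof.
  intros Hp Hl Hg1 Hg2 Hg3 Ht Hk Ha Ha' Hb Hb' Hb1 Hbeta HL HLt I1 I2.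
  assert (Hbp : 0 < beta) by (subst; pose proof (Rpower_pos (Lam+1) (p-2)); nra).
  assert (HD : beta * b^2 <= g1 * rpow (lam+b) (p-2) * b^2).
  { pose proof (D_small p Lam lam b Hp Hl (conj Hb Hb1)). subst beta. rewrite !Rmult_assoc. apply Rmult_le_compat_l; lra. }
  set (u := (a^2 - a'^2)/k) in *.
  assert (HX : u + beta*b^2 <= b*r + g2*L*a*b + beta/8*b'*b + s^2).
  { destruct (Rle_lt_dec b' (L*a)).
    - assert (g2*b' <= g2*(L*a)) by (apply Rmult_le_compat_l; lra). assert (g2*b'*b <= g2*L*a*b) by (rewrite (Rmult_assoc g2 L a); apply Rmult_le_compat_r; lra). assert (0 <= beta/8*b'*b) by (apply Rmult_le_pos; [apply Rmult_le_pos|]; lra). lra.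
    - assert (0 < b') by nra.
      pose proof (min_case g3 theta L beta a b b' Hg3 Ht HL Hbp HLt Ha Hb H r0). assert (0 <= g2*L*a*b) by (repeat apply Rmult_le_pos; lra). lra. }
  assert (Y1 : b*r <= beta/16*b^2 + 4/beta*r^2).
  { assert (0 <= /beta * (beta/4*b - 2*r)^2) by (apply Rmult_le_pos; [left; apply Rinv_0_lt_compat; lra| apply pow2_ge_0]).
    replace (beta/16*b^2 + 4/beta*r^2) with (b*r + /beta * (beta/4*b - 2*r)^2) by (field; lra). lra. }
  assert (Y2 : g2*L*a*b <= beta/16*b^2 + 4/beta*(g2*L)^2*a^2).
  { assert (0 <= /beta * (beta/4*b - 2*(g2*L*a))^2) by (apply Rmult_le_pos; [left; apply Rinv_0_lt_compat; lra| apply pow2_ge_0]).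
    replace (beta/16*b^2 + 4/beta*(g2*L)^2*a^2) with (g2*L*a*b + /beta * (beta/4*b - 2*(g2*L*a))^2) by (field; lra). lra. }
  assert (Y3 : beta/8*b'*b <= beta/16*b'^2 + beta/16*b^2).
  { assert (0 <= beta*(b'-b)^2) by (apply Rmult_le_pos; [lra|apply pow2_ge_0]). replace (beta/16*b'^2 + beta/16*b^2) with (beta/8*b'*b + beta*(b'-b)^2/16) by field. lra. }
  assert (HU : u*k = a^2 - a'^2) by (unfold u; field; lra).
  assert (Hm : (u + beta*b^2)*k <= (beta/16*b^2 + 4/beta*r^2 + (beta/16*b^2 + 4/beta*(g2*L)^2*a^2) + (beta/16*b'^2 + beta/16*b^2) + s^2)*k).
  { apply Rmult_le_compat_r; lra. }
  assert (0 <= k*b'^2) by nra. assert (0 <= k*b^2) by nra.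
  nra.
Qed.

Lemma Rpower_one e : Rpower 1 e = 1.
Proof. unfold Rpower; rewrite ln_1, Rmult_0_r; apply exp_0. Qed.

Lemma rpow_le1 x e : 0 <= x <= 1 -> 0 <= e -> rpow x e <= 1.
Proof.
  intros Hx He. destruct (Req_dec x 0) as [->|Hx0].
  - unfold rpow; destruct (Req_EM_T 0 0); [destruct (Req_EM_T e 0); lra|lra].
  - rewrite rpow_pos by lra. rewrite <- (Rpower_one e). apply Rle_Rpower_l; lra.
Qed.

Lemma bbound p Lam g1 g2 g3 theta lam k a a' b b' r s beta B1 tau sigma :
  1 < p -> p <= 2 -> 0 <= lam <= Lam -> 0 < Lam -> 0 < g1 -> 0 < g2 -> 0 < g3 ->
  0 < theta <= 1 -> 0 < k -> 0 <= a -> 0 <= a' -> 0 <= b -> 0 <= b' <= 1 ->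
  beta = g1 * Rpower (Lam+1) (p-2) ->
  0 < B1 -> Rpower B1 (p-1) = (1+g2)/beta ->
  0 < tau -> Rpower tau theta = beta/(5*g3) ->
  a'^2 <= sigma*k -> 0 <= sigma <= beta/5 -> r <= beta/5 -> r <= 1 ->
  s^2 <= beta/5 -> s^2 <= 1 ->
  k*(sigma + B1*(1+g2) + 1) < tau^2 ->
  (a^2 - a'^2)/k + g1 * rpow (lam+b) (p-2) * b^2 <= b*r + g2*b'*b + s^2 ->
  (a^2 - a'^2)/k + g1 * rpow (lam+b) (p-2) * b^2 <= b*r + g3*b*rpow b' (1-theta) * rpow a theta + s^2 ->
  b <= 1.
Proof.
  intros Hp1 Hp Hl HL Hg1 Hg2 Hg3 Ht Hk Ha Ha' Hb Hb' Hbeta HB1 HB1e Htau Htaue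
    Ha's Hsig Hr1 Hr2 Hs1 Hs2 Hkt I1 I2.
  destruct (Rle_lt_dec b 1) as [|Hbig]; [auto|exfalso].
  assert (Hbp : 0 < beta) by (rewrite Hbeta; apply Rmult_lt_0_compat; [lra|apply Rpower_pos]).
  set (Rp := Rpower b (p-1)).
  assert (HRp1 : 1 <= Rp).
  { unfold Rp; rewrite <- (Rpower_one (p-1)) at 1. apply Rle_Rpower_l; lra. }
  assert (HD : beta * (b*Rp) <= g1 * rpow (lam+b) (p-2) * b^2).
  { pose proof (D_big p Lam lam b Hp1 Hp Hl HL (Rlt_le _ _ Hbig)). rewrite Hbeta; fold Rp in H.
    rewrite (Rmult_assoc g1 (Rpower _ _)), (Rmult_assoc g1 (rpow _ _)). apply Rmult_le_compat_l; [lra|]. exact H. }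
  set (u := (a^2 - a'^2)/k) in *.
  assert (HC : b*(r+g2) - beta*(b*Rp) <= B1*(1+g2)).
  { destruct (Rle_lt_dec b B1).
    - assert (b*(r+g2) <= b*(1+g2)) by (apply Rmult_le_compat_l; lra).
      assert (b*(1+g2) <= B1*(1+g2)) by (apply Rmult_le_compat_r; lra).
      assert (0 <= beta*(b*Rp)) by (apply Rmult_le_pos; [lra|apply Rmult_le_pos; lra]). lra.
    - assert (Rpower B1 (p-1) <= Rp) by (apply Rle_Rpower_l; lra).
      rewrite HB1e in H.
      assert (1+g2 <= beta*Rp).
      { replace (1+g2) with (beta * ((1+g2)/beta)) by (field; lra). apply Rmult_le_compat_l; lra. }
      assert (b*(r+g2) <= b*(beta*Rp)) by (apply Rmult_le_compat_l; lra).
      assert (0 <= B1*(1+g2)) by (apply Rmult_le_pos; lra). nra. }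
  assert (g2*b'*b <= g2*b) by (rewrite Rmult_assoc; apply Rmult_le_compat_l; nra).
  assert (Hu : u <= B1*(1+g2) + 1) by nra.
  assert (Hua : u*k = a^2 - a'^2) by (unfold u; field; lra).
  assert (Ha2 : a^2 < tau^2).
  { assert (u*k <= (B1*(1+g2)+1)*k) by (apply Rmult_le_compat_r; lra). nra. }
  assert (Hat : a < tau) by nra.
  assert (Hra : rpow a theta <= beta/(5*g3)).
  { destruct (Req_dec a 0) as [->|Ha0].
    - rewrite rpow0 by lra. left; apply Rdiv_lt_0_compat; lra.
    - rewrite rpow_pos by lra. rewrite <- Htaue. apply Rle_Rpower_l; lra. }
  assert (Hrb : rpow b' (1-theta) <= 1) by (apply rpow_le1; lra).
  pose proof (rpow_nonneg b' (1-theta)). pose proof (rpow_nonneg a theta).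
  assert (rpow b' (1-theta) * rpow a theta <= beta/(5*g3)).
  { replace (beta/(5*g3)) with (1 * (beta/(5*g3))) by ring. apply Rmult_le_compat; lra. }
  assert (Hg3t : g3*b*rpow b' (1-theta) * rpow a theta <= b*(beta/5)).
  { rewrite Rmult_assoc, Rmult_assoc. replace (b*(beta/5)) with (g3*(b*(beta/(5*g3)))) by (field; lra).
    apply Rmult_le_compat_l; [lra|]. apply Rmult_le_compat_l; lra. }
  assert (Hul : - sigma <= u).
  { assert (-sigma*k <= u*k) by nra. apply (Rmult_le_reg_r k); lra. }
  assert (beta*b <= beta*(b*Rp)) by (apply Rmult_le_compat_l; nra).
  assert (b*r <= b*(beta/5)) by (apply Rmult_le_compat_l; lra).
  nra.
Qed.

Fixpoint sumr (f : nat -> R) (n : nat) : R :=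
  match n with O => 0 | S n => sumr f n + f (S n) end.

Lemma sumr_R0 f n : sumr f n + f 0%nat = sum_f_R0 f n.
Proof. induction n; simpl; lra. Qed.

Lemma sum_f_R0_mono f n M : (forall j, 0 <= f j) -> (n <= M)%nat -> sum_f_R0 f n <= sum_f_R0 f M.
Proof.
  intros Hf H. induction H; [lra|]. simpl. specialize (Hf (S m)). lra.
Qed.

Lemma sumr_le f n M : (forall j, 0 <= f j) -> (n <= M)%nat -> sumr f n <= sum_f_R0 f M.
Proof.
  intros Hf H. rewrite <- (sum_f_R0_mono f n M Hf H), <- sumr_R0. specialize (Hf 0%nat). lra.
Qed.

Lemma sumr_nonneg f n : (forall j, 0 <= f j) -> 0 <= sumr f n.
Proof. intros Hf; induction n; simpl; [lra|]. specialize (Hf (S n)); lra. Qed.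

Lemma sumr_lin c f g n : sumr (fun j => c * f j + g j) n = c * sumr f n + sumr g n.
Proof. induction n; simpl; [ring|]. rewrite IHn; ring. Qed.

Lemma sumr_sum_f f M : (1 <= M)%nat -> sum_f 1 M f = sumr f M.
Proof.
  intros H. destruct M as [|n]; [lia|]. unfold sum_f. replace (S n - 1)%nat with n by lia.
  clear H. induction n; simpl; [replace (0+1)%nat with 1%nat by lia; lra|].
  rewrite IHn. replace (S (n+1)) with (S (S n)) by lia. simpl. ring.
Qed.

Lemma max_from1_le f M B : (forall j, (1 <= j <= M)%nat -> f j <= B) -> (1 <= M)%nat -> max_from1 f M <= B.
Proof.
  intros H HM. induction M as [|n IH]; [lia|].
  destruct n as [|n']; simpl.
  - apply H; lia.
  - apply Rmax_lub.
    + apply IH; [intros; apply H; lia|lia].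
    + apply H; lia.
Qed.

Lemma term_le_sum f j M : (forall i, 0 <= f i) -> (j <= M)%nat -> f j <= sum_f_R0 f M.
Proof.
  intros Hf H. apply Rle_trans with (sum_f_R0 f j); [|now apply sum_f_R0_mono].
  destruct j; simpl; [lra|]. pose proof (sumr_nonneg f j Hf). rewrite <- sumr_R0.
  pose proof (Hf 0%nat). lra.
Qed.

Lemma nn3 u v d w : 0 <= u -> 0 <= v -> 0 < d -> 0 <= w -> 0 <= u*v/d*w.
Proof. intros. apply Rmult_le_pos; [|auto]. unfold Rdiv. apply Rmult_le_pos; [apply Rmult_le_pos; auto|].
  left; apply Rinv_0_lt_compat; auto. Qed.

Lemma divmul x k y z : 0 < k -> x / k + y <= z -> x + k * y <= k * z.
Proof. intros Hk H. apply (Rmult_le_compat_l k) in H; [|lra].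
  replace (k * (x/k + y)) with (x + k*y) in H by (field; lra). lra. Qed.

Theorem lemma2 (p T g0 g1 g2 g3 Lam theta : R)
  (hp1 : 1 < p) (hp2 : p <= 2) (hT : 0 < T)
  (hg0 : 0 < g0) (hg1 : 0 < g1) (hg2 : 0 < g2) (hg3 : 0 < g3) (hLam : 0 < Lam)
  (hth0 : 0 < theta) (hth1 : theta <= 1) :
  exists kbar g0bar g4 g5 : R,
    0 < kbar /\ kbar <= 1 /\ 0 < g0bar /\ 0 < g4 /\ 0 < g5 /\
    forall (M : nat) (k h lam : R) (a b r s : nat -> R),
      (1 <= M)%nat ->
      k = T / INR M -> 0 < k -> k < kbar ->
      0 < h -> h < 1 / sqrt g0 -> h ^ 2 < g0bar * k ->
      0 <= lam -> lam <= Lam ->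
      (forall m, (m <= M)%nat -> 0 <= a m) ->
      (forall m, (m <= M)%nat -> 0 <= b m) ->
      a 0%nat ^ 2 <= g0 * h ^ 2 ->
      b 0%nat ^ 2 <= g0 * h ^ 2 ->
      k * sum_f_R0 (fun m => r m ^ 2) M <= g0 * h ^ 2 ->
      k * sum_f_R0 (fun m => s m ^ 2) M <= g0 * h ^ 2 ->
      (forall m, (1 <= m <= M)%nat ->
         (a m ^ 2 - a (m - 1)%nat ^ 2) / k
           + g1 * rpow (lam + b m) (p - 2) * b m ^ 2
         <= b m * r m + g2 * b (m - 1)%nat * b m + s m ^ 2) ->
      (forall m, (1 <= m <= M)%nat ->
         (a m ^ 2 - a (m - 1)%nat ^ 2) / k
           + g1 * rpow (lam + b m) (p - 2) * b m ^ 2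
         <= b m * r m
            + g3 * b m * rpow (b (m - 1)%nat) (1 - theta) * rpow (a m) theta
            + s m ^ 2) ->
      max_from1 b M <= 1 /\
      max_from1 (fun m => a m ^ 2) M
        + g1 * rpow (lam + Lam) (p - 2) * (k * sum_f 1 M (fun m => b m ^ 2))
      <= g4 * h ^ 2 * exp (2 * g5 * k * INR M).
Proof.
  set (c := Rpower (Lam+1) (p-2)).
  assert (hc : 0 < c) by apply Rpower_pos.
  set (beta := g1 * c).
  assert (hbeta : 0 < beta) by (apply Rmult_lt_0_compat; lra).
  set (L := Rpower (8*g3/beta) (1/theta)).
  assert (hL : 0 < L) by apply Rpower_pos.
  assert (hLe : Rpower L theta = 8*g3/beta).
  { unfold L. rewrite Rpower_mult. replace (1/theta*theta) with 1 by (field; lra).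
    apply Rpower_1. apply Rdiv_lt_0_compat; lra. }
  set (Q := 4/beta*(g2*L)^2).
  assert (hQ : 0 < Q).
  { unfold Q. apply Rmult_lt_0_compat; [apply Rdiv_lt_0_compat; lra|].
    apply pow_lt. apply Rmult_lt_0_compat; lra. }
  set (C0 := g0*(2 + beta/4 + 4/beta)).
  assert (hC0 : 0 < C0).
  { unfold C0. apply Rmult_lt_0_compat; [lra|]. assert (0 < 4/beta) by (apply Rdiv_lt_0_compat; lra). lra. }
  set (E := exp (2*Q*T)).
  assert (hE : 0 < E) by apply exp_pos.
  set (B1 := Rpower ((1+g2)/beta) (1/(p-1))).
  assert (hB1 : 0 < B1) by apply Rpower_pos.
  assert (hB1e : Rpower B1 (p-1) = (1+g2)/beta).
  { unfold B1. rewrite Rpower_mult. replace (1/(p-1)*(p-1)) with 1 by (field; lra).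
    apply Rpower_1. apply Rdiv_lt_0_compat; lra. }
  set (tau := Rpower (beta/(5*g3)) (1/theta)).
  assert (htau : 0 < tau) by apply Rpower_pos.
  assert (htaue : Rpower tau theta = beta/(5*g3)).
  { unfold tau. rewrite Rpower_mult. replace (1/theta*theta) with 1 by (field; lra).
    apply Rpower_1. apply Rdiv_lt_0_compat; lra. }
  set (K1 := C0*E + B1*(1+g2) + 1).
  assert (hK1 : 0 < K1).
  { unfold K1. assert (0 < C0*E) by (apply Rmult_lt_0_compat; lra).
    assert (0 < B1*(1+g2)) by (apply Rmult_lt_0_compat; lra). lra. }
  set (kbar := Rmin 1 (Rmin (1/(2*Q)) (tau^2/K1))).
  set (g0bar := Rmin 1 (Rmin (1/g0) (Rmin (beta^2/(25*g0)) (Rmin (beta/(5*g0)) (beta/(5*(C0*E))))))).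
  set (mu := Rpower Lam (p-2)).
  assert (hmu : 0 < mu) by apply Rpower_pos.
  set (g4 := (1 + 2*mu/c)*C0).
  assert (hkb : 0 < kbar).
  { unfold kbar. repeat apply Rmin_pos; try lra;
    try (apply Rdiv_lt_0_compat; lra); try (apply Rdiv_lt_0_compat; [apply pow_lt|]; lra). }
  assert (hgb : 0 < g0bar).
  { unfold g0bar. repeat apply Rmin_pos; try lra; apply Rdiv_lt_0_compat; try nra. }
  exists kbar, g0bar, g4, Q.
  split; [exact hkb|]. split; [apply Rmin_l|]. split; [exact hgb|].
  split. { unfold g4. apply Rmult_lt_0_compat; [|lra].
    assert (0 < 2*mu/c) by (apply Rdiv_lt_0_compat; lra). lra. }
  split; [exact hQ|].
  intros M k h lam a b r s HM Hk Hk0 Hkb Hh Hhs Hhk Hl0 Hl1 Ha Hb Ha0 Hb0 Hr Hs I1 I2.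
  assert (HMp : 0 < INR M) by (apply lt_0_INR; lia).
  assert (HkM : k * INR M = T) by (rewrite Hk; field; lra).
  assert (Hk1 : k <= 1) by (pose proof (Rmin_l 1 (Rmin (1/(2*Q)) (tau^2/K1))); fold kbar in H; lra).
  assert (HkQ : k*Q <= 1/2).
  { assert (k <= 1/(2*Q)).
    { pose proof (Rmin_r 1 (Rmin (1/(2*Q)) (tau^2/K1))). pose proof (Rmin_l (1/(2*Q)) (tau^2/K1)).
      fold kbar in H. lra. }
    apply (Rmult_le_compat_r Q) in H; [|lra]. replace (1/(2*Q)*Q) with (1/2) in H by (field; lra). lra. }
  assert (HkK : k*K1 < tau^2).
  { assert (k < tau^2/K1).
    { pose proof (Rmin_r 1 (Rmin (1/(2*Q)) (tau^2/K1))). pose proof (Rmin_r (1/(2*Q)) (tau^2/K1)).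
      fold kbar in H. lra. }
    apply (Rmult_lt_compat_r K1) in H; [|lra]. replace (tau^2/K1*K1) with (tau^2) in H by (field; lra). lra. }
  assert (Hgb1 : g0bar <= 1) by apply Rmin_l.
  assert (Hgb2 : g0*g0bar <= 1).
  { assert (g0bar <= 1/g0) by (unfold g0bar; rewrite Rmin_r; apply Rmin_l).
    apply (Rmult_le_compat_l g0) in H; [|lra]. replace (g0*(1/g0)) with 1 in H by (field; lra). lra. }
  assert (Hgb3 : g0*g0bar <= beta^2/25).
  { assert (g0bar <= beta^2/(25*g0)) by (unfold g0bar; rewrite Rmin_r, Rmin_r; apply Rmin_l).
    apply (Rmult_le_compat_l g0) in H; [|lra]. replace (g0*(beta^2/(25*g0))) with (beta^2/25) in H by (field; lra). lra. }
  assert (Hgb4 : g0*g0bar <= beta/5).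
  { assert (g0bar <= beta/(5*g0)) by (unfold g0bar; rewrite Rmin_r, Rmin_r, Rmin_r; apply Rmin_l).
    apply (Rmult_le_compat_l g0) in H; [|lra]. replace (g0*(beta/(5*g0))) with (beta/5) in H by (field; lra). lra. }
  assert (Hgb5 : C0*E*g0bar <= beta/5).
  { assert (g0bar <= beta/(5*(C0*E))) by (unfold g0bar; rewrite Rmin_r, Rmin_r, Rmin_r; apply Rmin_r).
    assert (0 < C0*E) by (apply Rmult_lt_0_compat; lra).
    apply (Rmult_le_compat_l (C0*E)) in H; [|lra]. replace (C0*E*(beta/(5*(C0*E)))) with (beta/5) in H by (field; lra). lra. }
  assert (Hh2 : h^2*g0 < 1).
  { assert (Hsq : 0 < sqrt g0) by (apply sqrt_lt_R0; lra).
    assert (h*sqrt g0 < 1).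
    { apply (Rmult_lt_compat_r (sqrt g0)) in Hhs; [|lra]. replace (1/sqrt g0*sqrt g0) with 1 in Hhs by (field; lra). lra. }
    assert (sqrt g0 * sqrt g0 = g0) by (apply sqrt_sqrt; lra).
    assert (0 < h*sqrt g0) by nra. nra. }
  assert (Hrj : forall j, (j <= M)%nat -> r j <= beta/5 /\ r j <= 1).
  { intros j Hj. assert (r j^2 <= sum_f_R0 (fun m => r m^2) M) by (apply (term_le_sum (fun m => r m^2)); [intros; apply pow2_ge_0|auto]).
    assert (k*r j^2 <= g0*h^2) by nra.
    assert (r j^2 < g0*g0bar) by nra. split; nra. }
  assert (Hsj : forall j, (j <= M)%nat -> s j^2 <= beta/5 /\ s j^2 <= 1).
  { intros j Hj. assert (s j^2 <= sum_f_R0 (fun m => s m^2) M) by (apply (term_le_sum (fun m => s m^2)); [intros; apply pow2_ge_0|auto]).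
    assert (k*s j^2 <= g0*h^2) by nra.
    assert (s j^2 < g0*g0bar) by nra. split; lra. }
  set (Yf := fun j => a j^2 + k*beta/4*b j^2).
  set (Rr := fun j => 4/beta*r j^2 + s j^2).
  set (Bsq := fun j => b j^2).
  assert (HBsq : forall n, 0 <= sumr Bsq n) by (intros; apply sumr_nonneg; intros; unfold Bsq; apply pow2_ge_0).
  assert (HF : forall n, (n <= M)%nat -> Yf 0%nat + k*sumr Rr n <= C0*h^2).
  { intros n Hn. unfold Rr. rewrite sumr_lin.
    assert (HS1 : sumr (fun j => r j^2) n <= sum_f_R0 (fun m => r m^2) M) by (apply sumr_le; [intros; apply pow2_ge_0|auto]).
    assert (HS2 : sumr (fun j => s j^2) n <= sum_f_R0 (fun m => s m^2) M) by (apply sumr_le; [intros; apply pow2_ge_0|auto]).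
    assert (k*sumr (fun j => r j^2) n <= g0*h^2) by nra.
    assert (k*sumr (fun j => s j^2) n <= g0*h^2) by nra.
    assert (k*beta/4*(b O)^2 <= beta/4*(g0*h^2)).
    { assert (0 <= (b O)^2) by apply pow2_ge_0.
      assert (k*(b O)^2 <= g0*h^2) by nra.
      replace (k*beta/4*(b O)^2) with (beta/4*(k*(b O)^2)) by (field; lra).
      apply Rmult_le_compat_l; lra. }
    assert (4/beta*(k*sumr (fun j => r j^2) n) <= 4/beta*(g0*h^2)).
    { apply Rmult_le_compat_l; [left; apply Rdiv_lt_0_compat|]; lra. }
    unfold Yf, C0.
    replace (k * (4 / beta * sumr (fun j : nat => r j ^ 2) n + sumr (fun j : nat => s j ^ 2) n))
      with (4/beta*(k*sumr (fun j => r j^2) n) + k*sumr (fun j : nat => s j ^ 2) n) by (field; lra).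
    replace (g0 * (2 + beta / 4 + 4 / beta) * h ^ 2) with (g0*h^2 + beta/4*(g0*h^2) + 4/beta*(g0*h^2) + g0*h^2) by (field; lra).
    lra. }
  assert (HYnn : forall j, 0 <= Yf j).
  { intros j. unfold Yf. assert (0 <= a j^2) by apply pow2_ge_0. assert (0 <= b j^2) by apply pow2_ge_0.
    assert (0 <= k*beta/4*b j^2) by (apply nn3; lra). lra. }
  assert (Hay : forall j, a j^2 <= Yf j).
  { intros j. unfold Yf. assert (0 <= b j^2) by apply pow2_ge_0.
    assert (0 <= k*beta/4*b j^2) by (apply nn3; lra). lra. }
  assert (Hb0' : b O <= 1).
  { assert (0 <= b O) by (apply Hb; lia). nra. }
  assert (MAIN : forall n, (n <= M)%nat ->
     (forall j, (1 <= j <= n)%nat -> b j <= 1) /\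
     Yf n + k*beta/2*sumr Bsq n <= Yf O + k*sumr Rr n + k*Q*sumr Yf n /\
     C0*h^2 + k*Q*sumr Yf n <= C0*h^2*exp (2*Q*k*INR n)).
  { induction n as [|n IH]; intros Hn.
    - split; [intros; lia|]. simpl. rewrite Rmult_0_r, Rmult_0_r, Rmult_0_r, Rmult_0_r, exp_0. lra.
    - destruct (IH ltac:(lia)) as [Hbj [HI HZ]].
      assert (Hexp : exp (2*Q*k*INR n) <= E).
      { unfold E. apply exp_le_mono. rewrite <- HkM.
        assert (INR n <= INR M) by (apply le_INR; lia).
        assert (0 < 2*Q*k) by nra. nra. }
      assert (HYn : Yf n <= C0*h^2*E).
      { pose proof (HF n ltac:(lia)). pose proof (HBsq n).
        assert (0 <= k*beta/2*sumr Bsq n) by (apply nn3; lra).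
        assert (0 < C0*h^2) by (apply Rmult_lt_0_compat; [lra|apply pow_lt; lra]).
        assert (C0*h^2*exp (2*Q*k*INR n) <= C0*h^2*E) by (apply Rmult_le_compat_l; lra). lra. }
      assert (Han : a n^2 <= (C0*E*g0bar)*k).
      { pose proof (Hay n). assert (C0*E*h^2 <= C0*E*(g0bar*k)).
        { apply Rmult_le_compat_l; [apply Rmult_le_pos|]; lra. } nra. }
      assert (Hbn : 0 <= b n <= 1).
      { split; [apply Hb; lia|]. destruct n; [exact Hb0'|]. apply Hbj; lia. }
      assert (HI1 := I1 (S n) ltac:(lia)). assert (HI2 := I2 (S n) ltac:(lia)).
      replace (S n - 1)%nat with n in HI1, HI2 by lia.
      assert (HbS : b (S n) <= 1).
      { destruct (Hrj (S n) Hn). destruct (Hsj (S n) Hn).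
        apply (bbound p Lam g1 g2 g3 theta lam k (a (S n)) (a n) (b (S n)) (b n) (r (S n)) (s (S n))
                 beta B1 tau (C0*E*g0bar)); try lra; try (apply Ha; lia); try (apply Hb; lia); auto.
        - split; [apply Rmult_le_pos; [apply Rmult_le_pos|]|]; lra.
        - assert (C0*E*g0bar <= C0*E) by (rewrite <- (Rmult_1_r (C0*E)) at 2; apply Rmult_le_compat_l; [apply Rmult_le_pos|]; lra).
          unfold K1 in HkK. nra. }
      assert (HST := step p Lam g1 g2 g3 theta lam k (a (S n)) (a n) (b (S n)) (b n) (r (S n)) (s (S n)) beta L
                 hp2 (conj Hl0 Hl1) hg1 hg2 hg3 (conj hth0 hth1) Hk0 (Ha (S n) Hn) (Ha n ltac:(lia))
                 (Hb (S n) Hn) (proj1 Hbn) HbS eq_refl hL hLe HI1 HI2).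
      fold Q in HST.
      assert (HQa : k*Q*a (S n)^2 <= k*Q*Yf (S n)).
      { apply Rmult_le_compat_l; [nra|apply Hay]. }
      assert (HSTp : Yf (S n) + k*beta/2*Bsq (S n) <= Yf n + k*Rr (S n) + k*Q*Yf (S n)).
      { unfold Yf, Rr, Bsq. unfold Yf in HQa. lra. }
      split; [|split].
      + intros j Hj. destruct (Nat.eq_dec j (S n)) as [->|]; [exact HbS|apply Hbj; lia].
      + simpl. 
        replace (k*beta/2*(sumr Bsq n + Bsq (S n))) with (k*beta/2*sumr Bsq n + k*beta/2*Bsq (S n)) by (field; lra).
        replace (k*(sumr Rr n + Rr (S n))) with (k*sumr Rr n + k*Rr (S n)) by ring.
        replace (k*Q*(sumr Yf n + Yf (S n))) with (k*Q*sumr Yf n + k*Q*Yf (S n)) by ring.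
        lra.
      + simpl sumr.
        set (Z := C0*h^2 + k*Q*sumr Yf n) in *.
        set (Z' := C0*h^2 + k*Q*(sumr Yf n + Yf (S n))).
        assert (HYS : Yf (S n) <= Z').
        { pose proof (HF (S n) Hn). pose proof (HBsq (S n)).
          assert (0 <= k*beta/2*sumr Bsq (S n)) by (apply nn3; lra).
          simpl in *. unfold Z'.
          replace (k*beta/2*(sumr Bsq n + Bsq (S n))) with (k*beta/2*sumr Bsq n + k*beta/2*Bsq (S n)) in * by (field; lra).
          replace (k*(sumr Rr n + Rr (S n))) with (k*sumr Rr n + k*Rr (S n)) in * by ring.
          lra. }
        assert (HZ' : Z' = Z + k*Q*Yf (S n)) by (unfold Z', Z; ring).
        assert (HZ'nn : 0 <= Z').
        { pose proof (HYnn (S n)). lra. }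
        set (x := k*Q) in *.
        assert (Hx : 0 <= x) by (unfold x; nra).
        assert (HZ'b : Z' <= Z*(1+2*x)).
        { assert (x*Yf (S n) <= x*Z') by (apply Rmult_le_compat_l; lra).
          assert (H1x : Z'*(1-x) <= Z) by lra.
          assert (Z'*(1-x)*(1+2*x) <= Z*(1+2*x)) by (apply Rmult_le_compat_r; lra).
          assert (0 <= Z'*(x*(1-2*x))) by (apply Rmult_le_pos; [lra|apply Rmult_le_pos; lra]).
          assert (Z'*(1-x)*(1+2*x) = Z' + Z'*(x*(1-2*x))) by ring. lra. }
        rewrite S_INR.
        replace (2*Q*k*(INR n + 1)) with (2*Q*k*INR n + 2*x) by (unfold x; ring).
        rewrite exp_plus. pose proof (exp_ineq1_le (2*x)).
        assert (0 < C0*h^2) by (apply Rmult_lt_0_compat; [lra|apply pow_lt; lra]).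
        assert (0 <= Z) by (unfold Z; assert (0 <= sumr Yf n) by (apply sumr_nonneg; auto); nra).
        assert (Z*(1+2*x) <= C0*h^2*exp (2*Q*k*INR n) * (1+2*x)) by (apply Rmult_le_compat_r; lra).
        assert (C0*h^2*exp (2*Q*k*INR n) * (1+2*x) <= C0*h^2*exp (2*Q*k*INR n) * exp (2*x)).
        { apply Rmult_le_compat_l; [|lra]. pose proof (exp_pos (2*Q*k*INR n)). nra. }
        assert (C0*h^2*exp (2*Q*k*INR n) * exp (2*x) = C0*h^2*(exp (2*Q*k*INR n) * exp (2*x))) by ring. lra. }
  destruct (MAIN M (le_n M)) as [HbM [HIM HZM]].
  set (X := exp (2*Q*k*INR M)) in *.
  assert (HX : 0 < X) by apply exp_pos.
  assert (Hch : 0 < C0*h^2) by (apply Rmult_lt_0_compat; [lra|apply pow_lt; lra]).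
  split.
  { apply max_from1_le; auto. }
  assert (Hmax : max_from1 (fun m => a m ^ 2) M <= C0*h^2*X).
  { apply max_from1_le; auto. intros j Hj.
    destruct (MAIN j ltac:(lia)) as [_ [HIj HZj]].
    pose proof (HF j ltac:(lia)). pose proof (HBsq j). pose proof (Hay j).
    assert (0 <= k*beta/2*sumr Bsq j) by (apply nn3; lra).
    assert (0 <= sumr Yf j) by (apply sumr_nonneg; auto).
    assert (0 <= k*Q*sumr Yf j) by (apply Rmult_le_pos; [nra|lra]).
    assert (exp (2*Q*k*INR j) <= X).
    { unfold X. apply exp_le_mono. assert (INR j <= INR M) by (apply le_INR; lia). assert (0 < 2*Q*k) by nra. nra. }
    assert (C0*h^2*exp (2*Q*k*INR j) <= C0*h^2*X) by (apply Rmult_le_compat_l; lra).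
    lra. }
  assert (HS : k*beta/2*sumr Bsq M <= C0*h^2*X).
  { pose proof (HF M (le_n M)). pose proof (HYnn M). lra. }
  rewrite sumr_sum_f by auto. fold Bsq.
  assert (Hrp : rpow (lam+Lam) (p-2) <= mu).
  { rewrite rpow_pos by lra. unfold mu. apply Rpower_le_neg; lra. }
  assert (HS0 : 0 <= k*sumr Bsq M) by (apply Rmult_le_pos; [lra|auto]).
  assert (g1*rpow (lam+Lam) (p-2)*(k*sumr Bsq M) <= g1*mu*(k*sumr Bsq M)).
  { apply Rmult_le_compat_r; [auto|]. apply Rmult_le_compat_l; lra. }
  assert (E1 : g1*mu*(k*sumr Bsq M) = 2*mu/c*(k*beta/2*sumr Bsq M)) by (unfold beta; field; lra).
  assert (2*mu/c*(k*beta/2*sumr Bsq M) <= 2*mu/c*(C0*h^2*X)).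
  { apply Rmult_le_compat_l; [left; apply Rdiv_lt_0_compat; lra|auto]. }
  assert (E2 : g4*h^2*X = C0*h^2*X + 2*mu/c*(C0*h^2*X)) by (unfold g4; ring).
  fold X. lra.
Qed.
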